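(* Let $C$ be an $n\times n$ matrix of non-negative integers, and let $0\le m\le n$. Suppose: - all entries in the first $m$ rows of $C$ are non-zero; - all entries in the last $n-m$ rows of $C$ are zero; - the first column of $C$ is $(d,\dots,d,0,\dots,0)^T$, with $m$ entries equal to $d$, where $d$ is the gcd of the non-zero entries of $C$. If $C$ has rank $1$, then $J_{nm}+C\sim_M J_{nm}+D$, where $D$ is the $n\times n$ matrix whose first $m$ rows have all entries equal to $d$ and whose last $n-m$ rows are zero.
   Context: $J_{nm}$ ($0\le m\le n$) is the $n\times n$ matrix whose $i$-th row, for $i\le m$, has a $1$ in position $i$ and $0$ elsewhere, and whose last $n-m$ rows consist entirely of $\infty$. Arithmetic convention: $\infty+a=\infty$. For an $X\times X$ matrix $A$ with entries in $\{0,1,2,\dots\}\cup\{\infty\}$, $G_A$ is the graph with vertex set $X$ and exactly $A(x,y)$ edges from $x$ to $y$. For matrices, $A\sim_M B$ means $G_A\sim_M G_B$. A graph may have multiple edges and loops. A source receives no edges, a sink emits no edges, and an infinite emitter emits infinitely many edges. A vertex is singular if it is a sink or infinite emitter, and regular otherwise. Move-equivalence $\sim_M$ is the smallest equivalence relation on graphs with finitely many vertices such that $G\sim_M E$ whenever $E$ is isomorphic to a graph obtained from $G$ by one of the following moves. (S) Delete a regular source together with the edges it emits. (R) For a regular vertex $u$ emitting exactly one edge $f$, with $r(f)\neq u$, and all of whose incoming edges have the same source $v$: delete $u$, $f$ and the edges into $u$, and add for each $e\in r^{-1}(u)$ an edge $[ef]$ from $v$ to $r(f)$. (O) Out-splitting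 at a non-sink $v$ along a partition $\mathcal E_1,\dots,\mathcal E_n$ of $s^{-1}(v)$ with at most one infinite part. Replace $v$ by $v^1,\dots,v^n$. Each edge $e$ into $v$ becomes copies $e^1,\dots,e^n$ with $r(e^i)=v^i$ and source $s(e)$, or source $v^j$ if $s(e)=v$ and $e\in\mathcal E_j$. An edge from $v$ to $w\neq v$ lying in $\mathcal E_i$ gets source $v^i$. (I) In-splitting at a regular non-source $v$ along a partition $\mathcal E_1,\dots,\mathcal E_n$ of $r^{-1}(v)$. Replace $v$ by $v^1,\dots,v^n$. Each edge $e$ out of $v$ becomes copies $e^1,\dots,e^n$ with $s(e^i)=v^i$ and range $r(e)$, or range $v^j$ if $r(e)=v$ and $e\in\mathcal E_j$. An edge into $v$ from $w\neq v$ lying in $\mathcal E_i$ gets range $v^i$. *)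

(* Defs.v *)
From HB Require Import structures.
From mathcomp Require Import all_boot all_algebra.

Set Implicit Arguments.
Unset Strict Implicit.
Unset Printing Implicit Defensive.

Record graph := Graph { gV : finType; gE : Type; gs : gE -> gV; gr : gE -> gV }.

Definition graph_iso (G H : graph) : Prop :=
  exists (fV : gV G -> gV H) (fE : gE G -> gE H),
    bijective fV /\ bijective fE /\
    (forall e, gs (fE e) = fV (gs e)) /\ (forall e, gr (fE e) = fV (gr e)).

Section Moves.
Variable G : graph.

Definition finite_edges (P : gE G -> Prop) : Prop :=
  exists (k : nat) (f : 'I_k -> gE G), forall e, P e -> exists i, f i = e.

Definition is_sink (v : gV G) := forall e, gs e <> v.
Definition is_source (v : gV G) := forall e, gr e <> v.
Definition inf_emitter (v : gV G) := ~ finite_edges (fun e => gs e = v).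
Definition regular (v : gV G) := ~ is_sink v /\ ~ inf_emitter v.

Record keptE (v : gV G) := KeptE { ke : gE G; ke_s : gs ke != v; ke_r : gr ke != v }.
Record intoE (u : gV G) := IntoE { ie : gE G; ie_r : gr ie = u }.

Definition del_vertex (v : gV G) : graph :=
  @Graph ({x : gV G | x != v} : finType) (keptE v)
    (fun e => exist _ (gs (ke e)) (ke_s e))
    (fun e => exist _ (gr (ke e)) (ke_r e)).

Definition S_move (H : graph) : Prop :=
  exists v : gV G, regular v /\ is_source v /\ graph_iso (del_vertex v) H.

(* (R): delete u and f, add an edge [ef] from v to r(f) for each e into u *)
Definition R_graph (u v : gV G) (f : gE G) (hv : v != u) (hf : gr f != u) : graph :=
  @Graph ({x : gV G | x != u} : finType) (keptE u + intoE u)%type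
    (fun e => match e with
              | inl e => exist _ (gs (ke e)) (ke_s e)
              | inr _ => exist _ v hv end)
    (fun e => match e with
              | inl e => exist _ (gr (ke e)) (ke_r e)
              | inr _ => exist _ (gr f) hf end).

Definition R_move (H : graph) : Prop :=
  exists (u v : gV G) (f : gE G) (hv : v != u) (hf : gr f != u),
    regular u /\ gs f = u /\ (forall e, gs e = u -> e = f) /\
    (forall e, gr e = u -> gs e = v) /\ graph_iso (@R_graph u v f hv hf) H.

(* vertex set after splitting v into v^0, ..., v^(n-1) *)
Definition split_vert (v : gV G) (n : nat) (w : gV G) (i : 'I_n)
  : ({x : gV G | x != v} + 'I_n)%type :=
  if @insub _ (fun x : gV G => x != v) _ w is Some w' then inl w' else inr i.

(* (O) out-splitting at v along the partition given by p : s^{-1}(v) -> 'I_n *)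
Definition out_split_graph (v : gV G) (n : nat) (p : gE G -> 'I_n) : graph :=
  @Graph (({x : gV G | x != v} + 'I_n)%type : finType)
    ({e : gE G | gr e != v} + ({e : gE G | gr e == v} * 'I_n))%type
    (fun e => match e with
              | inl e => split_vert v (gs (val e)) (p (val e))
              | inr (e, _) => split_vert v (gs (val e)) (p (val e)) end)
    (fun e => match e with
              | inl e => split_vert v (gr (val e)) (p (val e))
              | inr (_, i) => inr i end).

Definition O_move (H : graph) : Prop :=
  exists (v : gV G) (n : nat) (p : gE G -> 'I_n),
    ~ is_sink v /\
    (forall i, exists e, gs e = v /\ p e = i) /\
    (forall i j, ~ finite_edges (fun e => gs e = v /\ p e = i) ->
                 ~ finite_edges (fun e => gs e = v /\ p e = j) -> i = j) /\
    graph_iso (out_split_graph v p) H.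

(* (I) in-splitting at v along the partition given by p : r^{-1}(v) -> 'I_n *)
Definition in_split_graph (v : gV G) (n : nat) (p : gE G -> 'I_n) : graph :=
  @Graph (({x : gV G | x != v} + 'I_n)%type : finType)
    ({e : gE G | gs e != v} + ({e : gE G | gs e == v} * 'I_n))%type
    (fun e => match e with
              | inl e => split_vert v (gs (val e)) (p (val e))
              | inr (_, i) => inr i end)
    (fun e => match e with
              | inl e => split_vert v (gr (val e)) (p (val e))
              | inr (e, _) => split_vert v (gr (val e)) (p (val e)) end).

Definition I_move (H : graph) : Prop :=
  exists (v : gV G) (n : nat) (p : gE G -> 'I_n),
    regular v /\ ~ is_source v /\
    (forall i, exists e, gr e = v /\ p e = i) /\
    graph_iso (in_split_graph v p) H.

End Moves.

Definition move_step (G H : graph) : Prop :=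
  S_move G H \/ R_move G H \/ O_move G H \/ I_move G H.

Inductive move_eq : graph -> graph -> Prop :=
| me_step G H : move_step G H -> move_eq G H
| me_refl G : move_eq G G
| me_sym G H : move_eq G H -> move_eq H G
| me_trans G H K : move_eq G H -> move_eq H K -> move_eq G K.

Inductive ext := Fin of nat | Inf.

Definition ext_add (a b : ext) : ext :=
  match a, b with Fin x, Fin y => Fin (x + y) | _, _ => Inf end.

Definition edge_count (a : ext) : Type :=
  match a with Fin k => 'I_k | Inf => nat end.

Definition graph_of (n : nat) (A : 'M[ext]_n) : graph :=
  @Graph ('I_n : finType) {p : 'I_n * 'I_n & edge_count (A p.1 p.2)}
    (fun e => (tag e).1) (fun e => (tag e).2).

Definition ext_addmx (n : nat) (A B : 'M[ext]_n) : 'M[ext]_n :=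
  \matrix_(i, j) ext_add (A i j) (B i j).

Definition ext_of_mx (n : nat) (C : 'M[nat]_n) : 'M[ext]_n := map_mx Fin C.

Definition Jnm (n m : nat) : 'M[ext]_n :=
  \matrix_(i, j) if (i < m)%N then Fin (i == j :> nat) else Inf.

Definition gcd_nz (n : nat) (C : 'M[nat]_n) : nat :=
  \big[gcdn/0%N]_(ij : 'I_n * 'I_n | C ij.1 ij.2 != 0%N) C ij.1 ij.2.

Definition Dmx (n m d : nat) : 'M[nat]_n :=
  \matrix_(i, j) if (i < m)%N then d else 0%N.

(* Main.v *)
Require Import Defs.
From mathcomp Require Import all_boot all_algebra.
From mathcomp Require Import zify.
From Stdlib Require Import Classical ClassicalEpsilon FunctionalExtensionality Eqdep_dec.

Set Implicit Arguments.
Unset Strict Implicit.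
Unset Printing Implicit Defensive.


Definition eqnum (A B : Type) := exists (f : A -> B) (g : B -> A), cancel f g /\ cancel g f.

Lemma eqnum_is A B (f : A -> B) : injective f -> (forall b, exists a, f a = b) -> eqnum A B.
Proof.
move=> fi fs.
pose g b := proj1_sig (constructive_indefinite_description _ (fs b)).
have gK : cancel g f by move=> b; rewrite /g; case: constructive_indefinite_description.
exists f, g; split=> // a; apply: fi; by rewrite gK.
Qed.

Lemma eqnum_refl A : eqnum A A. Proof. by exists id, id. Qed.
Lemma eqnum_sym A B : eqnum A B -> eqnum B A.
Proof. by case=> f [g [fK gK]]; exists g, f. Qed.
Lemma eqnum_trans A B C : eqnum A B -> eqnum B C -> eqnum A C.
Proof.
case=> f [g [fK gK]] [f' [g' [fK' gK']]]; exists (f' \o f), (g \o g'); split.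
  by move=> a /=; rewrite fK' fK.
by move=> a /=; rewrite gK gK'.
Qed.

Lemma eqnum_sum A B A' B' : eqnum A A' -> eqnum B B' -> eqnum (A + B) (A' + B').
Proof.
case=> f [g [fK gK]] [f' [g' [fK' gK']]].
exists (fun z => match z with inl a => inl (f a) | inr b => inr (f' b) end).
exists (fun z => match z with inl a => inl (g a) | inr b => inr (g' b) end).
by split; case=> x /=; rewrite ?fK ?gK ?fK' ?gK'.
Qed.

Lemma eqnum_sum0 A E : (E -> False) -> eqnum (A + E) A.
Proof.
move=> hE; exists (fun z => match z with inl a => a | inr e => match hE e with end end), inl.
by split=> //; case=> // e; case: (hE e).
Qed.

Lemma eqnum_sumC A B : eqnum (A + B) (B + A).
Proof.
exists (fun z => match z with inl a => inr a | inr b => inl b end).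
exists (fun z => match z with inl a => inr a | inr b => inl b end).
by split; case.
Qed.

Lemma eqnum_eqpred T (P Q : pred T) : P =1 Q -> eqnum {x | P x} {x | Q x}.
Proof.
move=> PQ.
have h x : P x -> Q x by rewrite PQ.
apply: (@eqnum_is _ _ (fun z => exist _ (val z) (h _ (valP z)))).
  by move=> z1 z2 [] /val_inj.
move=> [x qx]; have px : P x by rewrite PQ.
by exists (exist _ x px); apply: val_inj.
Qed.

Lemma eqnum_sigsum A B (P : pred (A + B)) :
  eqnum {z | P z} ({a | P (inl a)} + {b | P (inr b)}).
Proof.
apply: eqnum_sym.
apply: (@eqnum_is _ _ (fun z : {a | P (inl a)} + {b | P (inr b)} =>
   match z with inl a => exist P (inl (val a)) (valP a)
              | inr b => exist P (inr (val b)) (valP b) end)).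
  by case=> [[a p]|[b p]] [[a' p']|[b' p']] //= [] E; subst;
     rewrite (bool_irrelevance p p').
case=> [[a|b] p]; [exists (inl (exist _ a p)) | exists (inr (exist _ b p))]; exact: val_inj.
Qed.

Lemma eqnum_sigsig T (P Q : pred T) :
  eqnum {z : {x | P x} | Q (val z)} {x | P x && Q x}.
Proof.
have h (z : {x | P x}) : Q (val z) -> P (val z) && Q (val z) by case: z => x px /= q; rewrite px q.
apply: (@eqnum_is _ _ (fun z : {z : {x | P x} | Q (val z)} => exist _ (val (val z)) (h _ (valP z)))).
  by move=> z1 z2 [] E; apply/val_inj/val_inj.
move=> [x pq]; case/andP: (pq) => px qx.
by exists (exist _ (exist _ x px) qx); apply: val_inj.
Qed.

Lemma eqnum_sigprod T n (Q : pred T) (i0 : 'I_n) :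
  eqnum {z : T * 'I_n | Q z.1 && (z.2 == i0)} {x | Q x}.
Proof.
have h z : Q z.1 && (z.2 == i0) -> Q z.1 by case/andP.
apply: (@eqnum_is _ _ (fun z : {z : T * 'I_n | Q z.1 && (z.2 == i0)} => exist _ (val z).1 (h _ (valP z)))).
  move=> [[x i] pi] [[x' i'] pi'] [] /= ex; apply: val_inj => /=.
  case/andP: (pi) => _ /eqP ei; case/andP: (pi') => _ /eqP ei'.
  by rewrite /= in ei ei'; rewrite ex ei ei'.
move=> [x qx]; have p : Q (x, i0).1 && ((x, i0).2 == i0) by rewrite /= qx eqxx.
by exists (exist _ (x, i0) p); apply: val_inj.
Qed.

Lemma eqnum_false T E : (E -> False) -> eqnum {x : T | false} E.
Proof.
move=> hE; exists (fun z : {x : T | false} => match notF (valP z) with end).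
exists (fun e => match hE e with end).
by split; [case | move=> e; case: (hE e)].
Qed.

Lemma eqnum_bij A B (f : A -> B) (P : pred B) : bijective f ->
  eqnum {a | P (f a)} {b | P b}.
Proof.
case=> g fK gK.
apply: (@eqnum_is _ _ (fun z : {a | P (f a)} => exist _ (f (val z)) (valP z))).
  by move=> z1 z2 [] /(can_inj fK) /val_inj.
move=> [b pb]; have pa : P (f (g b)) by rewrite gK.
by exists (exist _ (g b) pa); apply: val_inj => /=.
Qed.

Lemma eqnum_inj A B : eqnum A B -> (forall b b' : B, b = b') -> forall a a' : A, a = a'.
Proof. by case=> f [g [fK gK]] h a a'; rewrite -(fK a) -(fK a') (h (f a) (f a')). Qed.

Lemma eqnum_pt A B : eqnum A B -> A -> B.
Proof. move=> h a; case: (constructive_indefinite_description _ h) => f _; exact: f a. Qed.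

Definition is_nz (a : ext) := if a is Fin 0 then false else true.

Lemma ec_pt a : is_nz a -> edge_count a.
Proof. by case: a => [[|k]|] //= _; [exact: ord0 | exact: 0%N]. Qed.

Lemma ec_nz a : edge_count a -> is_nz a.
Proof. by case: a => [[|k]|] //=; case. Qed.

Lemma ec0 : edge_count (Fin 0) -> False.
Proof. by case. Qed.

Lemma ec1 (x y : edge_count (Fin 1)) : x = y.
Proof. by apply: val_inj; case: x => [[]] // ?; case: y => [[]]. Qed.

Lemma nat_plus_fin k : eqnum nat ('I_k + nat).
Proof.
apply: (@eqnum_is _ _ (fun j : nat => match insub j with Some o => inl o | None => inr (j - k)%N end)).
  move=> j1 j2; case: insubP => [o1 h1 e1|h1]; case: insubP => [o2 h2 e2|h2] //.
  - by case=> eo; rewrite -e1 -e2 eo.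
  - case=> e; move: h1 h2; rewrite -!leqNgt => h1 h2.
    by rewrite -(subnK h1) -(subnK h2) e.
case=> [o|j].
  exists (val o); case: insubP => [o' _ e|]; last by rewrite ltn_ord.
  by congr inl; apply: val_inj.
exists (j + k)%N; case: insubP => [o' h e|h].
  by move: h; rewrite ltnNge leq_addl.
by rewrite addnK.
Qed.

Lemma nat_plus_nat : eqnum nat (nat + nat).
Proof.
apply: (@eqnum_is _ _ (fun j : nat => if odd j then inr j./2 else inl j./2)).
  move=> j1 j2; case o1: (odd j1); case o2: (odd j2) => //= -[] e;
  by rewrite -[j1]odd_double_half -[j2]odd_double_half o1 o2 e.
case=> j; [exists j.*2 | exists j.*2.+1]; rewrite /= ?odd_double ?uphalf_double ?half_double //.
Qed.

Lemma ec_add a b : eqnum (edge_count (ext_add a b)) (edge_count a + edge_count b).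
Proof.
case: a => [x|]; case: b => [y|] /=.
- exists (@split x y), (@unsplit x y); split; [exact: splitK | exact: unsplitK].
- exact: nat_plus_fin.
- apply: eqnum_trans (nat_plus_fin y) (eqnum_sumC _ _).
- exact: nat_plus_nat.
Qed.

Lemma ext_add0r a : ext_add a (Fin 0) = a.
Proof. by case: a => //= k; rewrite addn0. Qed.
Lemma ext_add0l a : ext_add (Fin 0) a = a.
Proof. by case: a. Qed.
Lemma ext_addC a b : ext_add a b = ext_add b a.
Proof. by case: a; case: b => //= ??; rewrite addnC. Qed.
Lemma ext_addA a b c : ext_add a (ext_add b c) = ext_add (ext_add a b) c.
Proof. by case: a; case: b; case: c => //= ???; rewrite addnA. Qed.


Definition fibP (G : graph) (x y : gV G) (e : gE G) := (gs e == x) && (gr e == y).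
Definition fib (G : graph) (x y : gV G) := {e : gE G | fibP x y e}.

Lemma fib_self (G : graph) (e : gE G) : fibP (gs e) (gr e) e.
Proof. by rewrite /fibP !eqxx. Qed.

Lemma iso_fib (G H : graph) (fV : gV G -> gV H) : bijective fV ->
  (forall x y, eqnum (fib x y) (fib (fV x) (fV y))) -> graph_iso G H.
Proof.
case=> gV fVK gVK Hf.
have C x y : {fg : (fib x y -> fib (fV x) (fV y)) * (fib (fV x) (fV y) -> fib x y) |
                cancel fg.1 fg.2 /\ cancel fg.2 fg.1}.
  apply: constructive_indefinite_description; case: (Hf x y) => f [g h]; by exists (f, g).
pose F x y := (proj1_sig (C x y)).1.
pose Gi x y := (proj1_sig (C x y)).2.
have FK x y : cancel (F x y) (Gi x y) by rewrite /F /Gi; case: (C x y) => fg [].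
have GK x y : cancel (Gi x y) (F x y) by rewrite /F /Gi; case: (C x y) => fg [].
have pfH (h : gE H) : fibP (fV (gV (gs h))) (fV (gV (gr h))) h by rewrite !gVK fib_self.
pose fE e := val (F (gs e) (gr e) (exist _ e (fib_self e))).
pose gE h := val (Gi _ _ (exist _ h (pfH h))).
have fEs e : gs (fE e) = fV (gs e) /\ gr (fE e) = fV (gr e).
  by rewrite /fE; case: (F _ _ _) => h /= /andP[/eqP -> /eqP ->].
have gEs h : gs (gE h) = gV (gs h) /\ gr (gE h) = gV (gr h).
  by rewrite /gE; case: (Gi _ _ _) => h' /= /andP[/eqP -> /eqP ->].
exists fV, fE; split; first by exists gV.
split; last by split=> e; case: (fEs e).
exists gE.
- move=> e.
  have key : forall x' y' (w : fib (fV x') (fV y')), x' = gs e -> y' = gr e ->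
      val w = fE e -> val (Gi x' y' w) = e.
    move=> x' y' w ex ey ew; subst x' y'.
    have -> : w = F (gs e) (gr e) (exist _ e (fib_self e)) by apply: val_inj.
    by rewrite FK.
  by apply: key => //; rewrite ?(proj1 (fEs e)) ?(proj2 (fEs e)) fVK.
- move=> h.
  have key : forall x' y' (w : fib x' y'), fV x' = gs h -> fV y' = gr h ->
      val w = gE h -> val (F x' y' w) = h.
    move=> x' y' w ex ey ew.
    have E1 : x' = gV (gs h) by rewrite -ex fVK.
    have E2 : y' = gV (gr h) by rewrite -ey fVK.
    subst x' y'.
    have -> : w = Gi _ _ (exist _ h (pfH h)) by apply: val_inj.
    by rewrite GK.
  by apply: key => //; rewrite ?(proj1 (gEs h)) ?(proj2 (gEs h)) gVK.
Qed.

Definition gF (V : finType) (c : V -> V -> ext) : graph :=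
  @Graph V {p : V * V & edge_count (c p.1 p.2)} (fun e => (tag e).1) (fun e => (tag e).2).

Lemma gF_fibQ (V : finType) (c : V -> V -> ext) (x y : V)
  (Q : forall p : V * V, edge_count (c p.1 p.2) -> bool) :
  eqnum {e : gE (gF c) | fibP (G := gF c) x y e && Q (tag e) (tagged e)} {q : edge_count (c x y) | Q (x, y) q}.
Proof.
apply: eqnum_sym.
have h (q : {q : edge_count (c x y) | Q (x, y) q}) :
  fibP (G := gF c) x y (existT (fun p : V * V => edge_count (c p.1 p.2)) (x, y) (val q))
  && Q (x, y) (val q) by rewrite /fibP /= !eqxx (valP q).
apply: (@eqnum_is _ _ (fun q => exist (fun e : gE (gF c) => fibP (G := gF c) x y e && Q (tag e) (tagged e)) _ (h q))).
  move=> q1 q2 E; have E' := f_equal (@proj1_sig _ _) E; simpl in E'.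
  apply: val_inj; exact: (inj_pair2_eq_dec _ (@eq_comparable _) _ _ _ _ E').
case=> [[[x' y'] q] pq]; case/andP: (pq) => /andP[/= /eqP ex /eqP ey] qq.
subst x' y'; by exists (exist _ q qq); apply: val_inj.
Qed.

Lemma gF_fib (V : finType) (c : V -> V -> ext) (x y : V) :
  eqnum (fib (G := gF c) x y) (edge_count (c x y)).
Proof.
apply: (@eqnum_trans _ {e : gE (gF c) | fibP (G := gF c) x y e && true}).
  by apply: eqnum_eqpred => e; rewrite andbT.
apply: eqnum_trans (gF_fibQ x y (fun _ _ => true)) _.
apply: (@eqnum_is _ _ (fun q : {q : edge_count (c x y) | true} => val q)); first exact: val_inj.
by move=> q; exists (exist _ q isT).
Qed.

Lemma iso_gF (V V' : finType) (c : V -> V -> ext) (c' : V' -> V' -> ext) (f : V -> V') :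
  bijective f -> (forall x y, c x y = c' (f x) (f y)) -> graph_iso (gF c) (gF c').
Proof.
move=> bf E; apply: (@iso_fib (gF c) (gF c') f bf) => x y.
apply: eqnum_trans (gF_fib _ _ _) _; rewrite E; apply: eqnum_sym; exact: gF_fib.
Qed.


Lemma eqnum_sub T (P : pred T) (R : pred {x | P x}) (Q : pred T) :
  (forall z, R z = Q (val z)) -> eqnum {z | R z} {x | P x && Q x}.
Proof.
move=> RQ; apply: eqnum_trans (eqnum_sigsig P Q).
exact: eqnum_eqpred.
Qed.

Lemma eqnum_subprod T n (P : pred T) (R : pred ({x | P x} * 'I_n)) (Q : pred T) (i0 : 'I_n) :
  (forall z, R z = Q (val z.1) && (z.2 == i0)) -> eqnum {z | R z} {x | P x && Q x}.
Proof.
move=> RQ.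
have E1 := eqnum_eqpred (Q := fun z : {x | P x} * 'I_n => Q (val z.1) && (z.2 == i0)) RQ.
apply: eqnum_trans E1 _.
have E2 := eqnum_sigprod (fun w : {x | P x} => Q (val w)) i0.
apply: eqnum_trans E2 _.
exact: eqnum_sub.
Qed.

Lemma eqnum_empty T (R : pred T) E : (forall z, R z = false) -> (E -> False) -> eqnum {z | R z} E.
Proof.
move=> h hE.
exists (fun z : {z | R z} => match notF (etrans (esym (h (val z))) (valP z)) with end).
exists (fun e => match hE e with end).
by split; [case=> z pz; exfalso; move: pz; rewrite h | move=> e; case: (hE e)].
Qed.

Section Splits.
Variable G : graph.
Variable v : gV G.

Lemma sv_inl n (w : gV G) (i : 'I_n) (x : {x : gV G | x != v}) :
  (split_vert v w i == inl x) = (w == val x).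
Proof.
rewrite /split_vert; case: insubP => [w' hw ew|hw] /=.
  by rewrite -ew.
apply/esym/negbTE; apply: contra hw => /eqP ->; exact: (valP x).
Qed.

Lemma sv_inr n (w : gV G) (i j : 'I_n) :
  (split_vert v w i == inr j) = (w == v) && (i == j).
Proof.
rewrite /split_vert; case: insubP => [w' hw ew|hw] /=.
  by rewrite (negbTE hw).
by move: hw; rewrite negbK => ->.
Qed.

Variable n : nat.
Variable p : gE G -> 'I_n.

Notation OS := (out_split_graph v p).
Notation IS := (in_split_graph v p).

Lemma os_ll (x y : {x : gV G | x != v}) :
  eqnum (fib (G := OS) (inl x) (inl y)) (fib (val x) (val y)).
Proof.
apply: eqnum_trans (eqnum_sigsum _) _.
apply: eqnum_trans (eqnum_sum _ (eqnum_refl _)) _.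
  apply: (eqnum_sub (Q := fun e => fibP (val x) (val y) e)).
  by move=> z; rewrite /fibP /= !sv_inl.
apply: eqnum_trans (eqnum_sum0 _ _) _.
  by move=> [[e i] /=]; rewrite /fibP /= andbF.
apply: eqnum_eqpred => e; rewrite /fibP.
have hy : val y != v := valP y.
by case: (gr e =P val y) => [->|]; rewrite ?hy ?andbF.
Qed.

Lemma os_lr (x : {x : gV G | x != v}) (i : 'I_n) :
  eqnum (fib (G := OS) (inl x) (inr i)) (fib (val x) v).
Proof.
apply: eqnum_trans (eqnum_sigsum _) _.
apply: eqnum_trans (eqnum_sumC _ _) _.
apply: eqnum_trans (eqnum_sum _ (eqnum_refl _)) _.
  apply: (@eqnum_subprod (gE G) n (fun e => gr e == v) _ (fun e => gs e == val x) i).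
  by case=> e j; rewrite /fibP /= sv_inl.
apply: eqnum_trans (eqnum_sum0 _ _) _.
  case=> a pa; have he : gr (val a) != v := valP a.
  by move: pa; rewrite /fibP /= sv_inr (negbTE he) andbF.
apply: eqnum_eqpred => e; rewrite /fibP andbC; done.
Qed.

Lemma os_rl (j : 'I_n) (y : {x : gV G | x != v}) :
  eqnum (fib (G := OS) (inr j) (inl y)) {e | fibP v (val y) e && (p e == j)}.
Proof.
apply: eqnum_trans (eqnum_sigsum _) _.
apply: eqnum_trans (eqnum_sum _ (eqnum_refl _)) _.
  apply: (eqnum_sub (Q := fun e => fibP v (val y) e && (p e == j))).
  by move=> z; rewrite /fibP /= sv_inl sv_inr -!andbA; congr andb; rewrite andbC.
apply: eqnum_trans (eqnum_sum0 _ _) _.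
  by move=> [[e i] /=]; rewrite /fibP /= andbF.
apply: eqnum_eqpred => e; rewrite /fibP.
have hy : val y != v := valP y.
by case: (gr e =P val y) => [->|]; rewrite ?hy ?andbF.
Qed.

Lemma os_rr (j i : 'I_n) :
  eqnum (fib (G := OS) (inr j) (inr i)) {e | fibP v v e && (p e == j)}.
Proof.
apply: eqnum_trans (eqnum_sigsum _) _.
apply: eqnum_trans (eqnum_sumC _ _) _.
apply: eqnum_trans (eqnum_sum _ (eqnum_refl _)) _.
  apply: (@eqnum_subprod (gE G) n (fun e => gr e == v) _ (fun e => (gs e == v) && (p e == j)) i).
  by case=> e k; rewrite /fibP /= sv_inr.
apply: eqnum_trans (eqnum_sum0 _ _) _.
  case=> a pa; have he : gr (val a) != v := valP a.
  by move: pa; rewrite /fibP /= !sv_inr (negbTE he) !andbF.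
apply: eqnum_eqpred => e; rewrite /fibP.
by case: (gr e == v); case: (gs e == v).
Qed.

Lemma is_ll (x y : {x : gV G | x != v}) :
  eqnum (fib (G := IS) (inl x) (inl y)) (fib (val x) (val y)).
Proof.
apply: eqnum_trans (eqnum_sigsum _) _.
apply: eqnum_trans (eqnum_sum _ (eqnum_refl _)) _.
  apply: (eqnum_sub (Q := fun e => fibP (val x) (val y) e)).
  by move=> z; rewrite /fibP /= !sv_inl.
apply: eqnum_trans (eqnum_sum0 _ _) _.
  by case=> [[e i] pa]; move: pa; rewrite /fibP /=.
apply: eqnum_eqpred => e; rewrite /fibP.
have hx : val x != v := valP x.
by case: (gs e =P val x) => [E|]; rewrite ?E ?hx ?andbF.
Qed.

Lemma is_lr (x : {x : gV G | x != v}) (j : 'I_n) :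
  eqnum (fib (G := IS) (inl x) (inr j)) {e | fibP (val x) v e && (p e == j)}.
Proof.
apply: eqnum_trans (eqnum_sigsum _) _.
apply: eqnum_trans (eqnum_sum _ (eqnum_refl _)) _.
  apply: (eqnum_sub (Q := fun e => fibP (val x) v e && (p e == j))).
  by move=> z; rewrite /fibP /= sv_inl sv_inr -!andbA.
apply: eqnum_trans (eqnum_sum0 _ _) _.
  by case=> [[e i] pa]; move: pa; rewrite /fibP /=.
apply: eqnum_eqpred => e; rewrite /fibP.
have hx : val x != v := valP x.
by case: (gs e =P val x) => [E|]; rewrite ?E ?hx ?andbF.
Qed.

Lemma is_rl (i : 'I_n) (y : {x : gV G | x != v}) :
  eqnum (fib (G := IS) (inr i) (inl y)) (fib v (val y)).
Proof.
apply: eqnum_trans (eqnum_sigsum _) _.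
apply: eqnum_trans (eqnum_sumC _ _) _.
apply: eqnum_trans (eqnum_sum _ (eqnum_refl _)) _.
  apply: (@eqnum_subprod (gE G) n (fun e => gs e == v) _ (fun e => gr e == val y) i).
  by case=> e k; rewrite /fibP /= sv_inl andbC.
apply: eqnum_trans (eqnum_sum0 _ _) _.
  case=> a pa; have he : gs (val a) != v := valP a.
  by move: pa; rewrite /fibP /= sv_inr (negbTE he).
exact: eqnum_refl.
Qed.

Lemma is_rr (i j : 'I_n) :
  eqnum (fib (G := IS) (inr i) (inr j)) {e | fibP v v e && (p e == j)}.
Proof.
apply: eqnum_trans (eqnum_sigsum _) _.
apply: eqnum_trans (eqnum_sumC _ _) _.
apply: eqnum_trans (eqnum_sum _ (eqnum_refl _)) _.
  apply: (@eqnum_subprod (gE G) n (fun e => gs e == v) _ (fun e => (gr e == v) && (p e == j)) i).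
  by case=> e k; rewrite /fibP /= sv_inr andbC.
apply: eqnum_trans (eqnum_sum0 _ _) _.
  case=> a pa; have he : gs (val a) != v := valP a.
  by move: pa; rewrite /fibP /= sv_inr (negbTE he).
apply: eqnum_eqpred => e; rewrite /fibP.
by rewrite andbA.
Qed.
End Splits.


Section RFib.
Variable G : graph.
Variables (u v : gV G) (f : gE G) (hv : v != u) (hf : gr f != u).

Lemma keptE_eqnum (Q : pred (gE G)) :
  eqnum {k : keptE u | Q (ke k)} {e | (gs e != u) && (gr e != u) && Q e}.
Proof.
have h (k : {k : keptE u | Q (ke k)}) : (gs (ke (val k)) != u) && (gr (ke (val k)) != u) && Q (ke (val k)).
  by case: k => [[e h1 h2] q] /=; rewrite h1 h2 q.
apply: (@eqnum_is _ _ (fun k => exist (fun e => (gs e != u) && (gr e != u) && Q e) _ (h k))).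
  move=> [[e1 a1 b1] q1] [[e2 a2 b2] q2] E; have /= E' := f_equal (@proj1_sig _ _) E.
  subst e2; rewrite (bool_irrelevance a1 a2) (bool_irrelevance b1 b2).
  by congr exist; apply: bool_irrelevance.
case=> e pe; case/andP: (pe) => /andP[a b] q.
by exists (exist _ (KeptE a b) q); apply: val_inj.
Qed.

Lemma intoE_eqnum : (forall e, gr e = u -> gs e = v) ->
  eqnum {t : intoE u | true} (fib v u).
Proof.
move=> hs.
have h (t : {t : intoE u | true}) : fibP v u (ie (val t)).
  by case: t => [[e r] _] /=; rewrite /fibP r (hs _ r) !eqxx.
apply: (@eqnum_is _ _ (fun t => exist (fun e => fibP v u e) _ (h t))).
  move=> [[e1 r1] q1] [[e2 r2] q2] E; have /= E' := f_equal (@proj1_sig _ _) E.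
  subst e2; rewrite (eq_irrelevance r1 r2).
  by congr exist; apply: bool_irrelevance.
case=> e pe; case/andP: (pe) => _ /eqP r.
by exists (exist _ (IntoE r) isT); apply: val_inj.
Qed.

Notation RG := (@R_graph G u v f hv hf).

Lemma rg_fib (x y : {x : gV G | x != u}) :
  eqnum (fib (G := RG) x y)
        (fib (val x) (val y) + {t : intoE u | (v == val x) && (gr f == val y)}).
Proof.
apply: eqnum_trans (eqnum_sigsum _) _.
apply: eqnum_sum.
  apply: eqnum_trans (eqnum_eqpred (Q := fun k : keptE u => fibP (val x) (val y) (ke k)) _) _.
    by move=> k; rewrite /fibP /=.
  apply: eqnum_trans (keptE_eqnum _) _.
  apply: eqnum_eqpred => e; rewrite /fibP.
  have hx : val x != u := valP x; have hy : val y != u := valP y.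
  case: (gs e =P val x) => [E|]; rewrite ?andbF //; case: (gr e =P val y) => [E'|]; rewrite ?andbF //.
  by rewrite E E' hx hy.
apply: eqnum_eqpred => t; by rewrite /fibP /=.
Qed.
End RFib.


Lemma iso_refl G : graph_iso G G.
Proof. by exists id, id; split; [exists id | split; [exists id|]]. Qed.

Lemma iso_trans G H K : graph_iso G H -> graph_iso H K -> graph_iso G K.
Proof.
case=> fV [fE [bV [bE [hs hr]]]] [fV' [fE' [bV' [bE' [hs' hr']]]]].
exists (fV' \o fV), (fE' \o fE); split; first exact: bij_comp bV' bV.
split; first exact: bij_comp bE' bE.
by split=> e /=; rewrite ?hs' ?hs ?hr' ?hr.
Qed.

Lemma finite_single (G : graph) (P : gE G -> Prop) :
  (forall e e', P e -> P e' -> e = e') -> finite_edges P.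
Proof.
move=> h; case: (classic (exists e, P e)) => [[e0 pe0]|ne].
  by exists 1, (fun _ => e0) => e pe; exists ord0; apply: h.
by exists 0, (fun i : 'I_0 => match notF (ltn_ord i) with end) => e pe; case: ne; exists e.
Qed.

Definition side A B (z : A + B) : 'I_2 := if z is inl _ then ord0 else ord_max.

Lemma side_eqnum A B (j : 'I_2) :
  eqnum {z : A + B | side z == j} (if j == ord0 then A else B).
Proof.
case: j => [[|[|k]] hk] //=.
- have -> : Ordinal hk = ord0 by apply: val_inj.
  rewrite ?eqxx /=.
  apply: (@eqnum_is _ _ (fun z : {z : A + B | side z == ord0} =>
     match val z as w return side w == ord0 -> A with inl a => fun _ => a | inr b => fun h => match notF h with end end (valP z))).
    case=> [[a|b] ha] [[a'|b'] ha'] //= E; by apply: val_inj; rewrite /= E.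
  by move=> a; exists (exist _ (inl a) (eqxx _)).
- have -> : Ordinal hk = ord_max by apply: val_inj.
  rewrite /=.
  apply: (@eqnum_is _ _ (fun z : {z : A + B | side z == ord_max} =>
     match val z as w return side w == ord_max -> B with inr b => fun _ => b | inl a => fun h => match notF h with end end (valP z))).
    case=> [[a|b] ha] [[a'|b'] ha'] //= E; by apply: val_inj; rewrite /= E.
  by move=> b; exists (exist _ (inr b) (eqxx _)).
Qed.

Lemma dec_bij (V : finType) (c a b : V -> V -> ext) :
  (forall x y, c x y = ext_add (a x y) (b x y)) ->
  forall pq : V * V, {psi : edge_count (c pq.1 pq.2) -> edge_count (a pq.1 pq.2) + edge_count (b pq.1 pq.2) | bijective psi}.
Proof.
move=> hab [x y] /=; apply: constructive_indefinite_description.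
have := ec_add (a x y) (b x y); rewrite -hab => -[f [g [fK gK]]].
by exists f; exists g.
Qed.

Section Cnt.
Variable V : finType.
Variables c a b : V -> V -> ext.
Hypothesis hab : forall x y, c x y = ext_add (a x y) (b x y).

Definition psi pq := proj1_sig (dec_bij hab pq).
Definition psiP pq : bijective (@psi pq) := proj2_sig (dec_bij hab pq).
Definition pside (e : gE (gF c)) := side (@psi (tag e) (tagged e)).

Lemma pfib_cnt x y (j : 'I_2) :
  eqnum {e : gE (gF c) | fibP (G := gF c) x y e && (pside e == j)}
        (edge_count (if j == ord0 then a x y else b x y)).
Proof.
apply: eqnum_trans (gF_fibQ x y (fun pq q => side (@psi pq q) == j)) _.
apply: eqnum_trans (eqnum_bij (fun z => side z == j) (psiP (x, y))) _.
by case: (j == ord0) (side_eqnum (edge_count (a x y)) (edge_count (b x y)) j).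
Qed.

Lemma pside_ex x y (j : 'I_2) : is_nz (if j == ord0 then a x y else b x y) ->
  exists e : gE (gF c), gs e = x /\ gr e = y /\ pside e = j.
Proof.
move=> /ec_pt q.
have [e] := eqnum_pt (eqnum_sym (pfib_cnt x y j)) q.
by case/andP=> /andP[/eqP ex /eqP ey] /eqP ej; exists e.
Qed.
End Cnt.

Lemma gF_edge (V : finType) (c : V -> V -> ext) x y : is_nz (c x y) ->
  exists e : gE (gF c), gs e = x /\ gr e = y.
Proof.
move=> /ec_pt q; have [e] := eqnum_pt (eqnum_sym (gF_fib c x y)) q.
by case/andP=> /eqP ex /eqP ey; exists e.
Qed.

Lemma gF_single (V : finType) (c : V -> V -> ext) w t :
  (forall y, c w y = Fin (y == t)) ->
  forall e e' : gE (gF c), gs e = w -> gs e' = w -> e = e'.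
Proof.
move=> hw.
have key (e : gE (gF c)) : gs e = w -> gr e = t.
  move=> ew; have := eqnum_pt (gF_fib c w (gr e)) (exist _ e (introT andP (conj (introT eqP ew) (eqxx _)))).
  by rewrite hw; case: (gr e =P t) => // _; case.
move=> e e' ew ew'.
have sub : forall q q' : edge_count (c w t), q = q' by rewrite hw eqxx; exact: ec1.
have := eqnum_inj (gF_fib c w t) sub
   (exist _ e (introT andP (conj (introT eqP ew) (introT eqP (key _ ew)))))
   (exist _ e' (introT andP (conj (introT eqP ew') (introT eqP (key _ ew'))))).
by case.
Qed.


Lemma ord2 (i : 'I_2) : i = ord0 \/ i = ord_max.
Proof. by case: i => [[|[|k]] hk] //; [left | right]; apply: val_inj. Qed.

Definition osc (V : finType) (c a b : V -> V -> ext) (u : V)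
  (z z' : ({x : V | x != u} + 'I_2)%type) : ext :=
 match z, z' with
 | inl x, inl y => c (val x) (val y)
 | inl x, inr _ => c (val x) u
 | inr j, inl y => if j == ord0 then a u (val y) else b u (val y)
 | inr j, inr _ => if j == ord0 then a u u else b u u end.
Arguments osc {V} c a b u z z'.

Lemma O_cnt (V : finType) (c a b : V -> V -> ext) u v0
  (hab : forall x y, c x y = ext_add (a x y) (b x y)) :
  (forall y, a u y = Fin (y == v0)) -> (exists y, is_nz (b u y)) ->
  forall H : graph, graph_iso (gF (osc c a b u)) H -> move_eq (gF c) H.
Proof.
move=> ha [y1 hb] H hH.
apply: me_step; right; right; left.
exists u, 2, (pside hab).
have [e0 [e0s [e0r e0p]]] : exists e : gE (gF c), gs e = u /\ gr e = v0 /\ pside hab e = ord0.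
  by apply: pside_ex; rewrite eqxx ha eqxx.
have [e1 [e1s [e1r e1p]]] : exists e : gE (gF c), gs e = u /\ gr e = y1 /\ pside hab e = ord_max.
  by apply: pside_ex.
split; first by move=> hs; exact: (hs e0 e0s).
split; first by move=> i; case: (ord2 i) => ->; [exists e0 | exists e1].
split.
  have fin0 : finite_edges (fun e : gE (gF c) => gs e = u /\ pside hab e = ord0).
    apply: finite_single => e e'.
    have key (e2 : gE (gF c)) : gs e2 = u -> pside hab e2 = ord0 ->
        fibP (G := gF c) u v0 e2 && (pside hab e2 == ord0).
      move=> es ep.
      have := eqnum_pt (pfib_cnt hab u (gr e2) ord0)
         (exist _ e2 (introT andP (conj (introT andP (conj (introT eqP es) (eqxx _))) (introT eqP ep)))).
      rewrite eqxx ha; case: (gr e2 =P v0) => [er _|_]; last by case.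
      by rewrite /fibP es er ep !eqxx.
    move=> [es ep] [es' ep'].
    have sub : forall q q' : edge_count (if ord0 == ord0 :> 'I_2 then a u v0 else b u v0), q = q'.
      by rewrite eqxx ha eqxx; exact: ec1.
    have := eqnum_inj (pfib_cnt hab u v0 ord0) sub (exist _ e (key e es ep)) (exist _ e' (key e' es' ep')).
    by case.
  move=> i j hi hj.
  case: (ord2 i) => Ei; first by subst i.
  case: (ord2 j) => Ej; first by subst j.
  by rewrite Ei Ej.
apply: iso_trans hH.
apply: (@iso_fib (@out_split_graph (gF c) u 2 (pside hab)) (gF (osc c a b u)) id); first by exists id.
move=> z z'; apply: eqnum_trans _ (eqnum_sym (gF_fib _ _ _)).
case: z => [x|j]; case: z' => [y|i] /=.
- exact: eqnum_trans (@os_ll (gF c) u 2 (pside hab) x y) (gF_fib c _ _).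
- exact: eqnum_trans (@os_lr (gF c) u 2 (pside hab) x i) (gF_fib c _ _).
- exact: eqnum_trans (@os_rl (gF c) u 2 (pside hab) j y) (pfib_cnt hab _ _ _).
- exact: eqnum_trans (@os_rr (gF c) u 2 (pside hab) j i) (pfib_cnt hab _ _ _).
Qed.

Definition isc (V : finType) (c a b : V -> V -> ext) (w : V)
  (z z' : ({x : V | x != w} + 'I_2)%type) : ext :=
 match z, z' with
 | inl x, inl y => c (val x) (val y)
 | inl x, inr j => if j == ord0 then a (val x) w else b (val x) w
 | inr _, inl y => c w (val y)
 | inr _, inr j => if j == ord0 then a w w else b w w end.
Arguments isc {V} c a b w z z'.

Lemma gF_regular (V : finType) (c : V -> V -> ext) w t :
  (forall y, c w y = Fin (y == t)) -> regular (G := gF c) w.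
Proof.
move=> hw; split.
  have [e [es _]] : exists e : gE (gF c), gs e = w /\ gr e = t by apply: gF_edge; rewrite hw eqxx.
  by move=> hs; exact: (hs e es).
move=> hinf; apply: hinf; apply: finite_single => e e' h h'; exact: gF_single hw e e' h h'.
Qed.

Lemma I_cnt (V : finType) (c a b : V -> V -> ext) w t
  (hab : forall x y, c x y = ext_add (a x y) (b x y)) :
  (forall y, c w y = Fin (y == t)) ->
  (exists x, is_nz (a x w)) -> (exists x, is_nz (b x w)) ->
  forall H : graph, graph_iso (gF (isc c a b w)) H -> move_eq (gF c) H.
Proof.
move=> hw [x0 ha] [x1 hb] H hH.
apply: me_step; right; right; right.
exists w, 2, (pside hab).
have [e0 [e0s [e0r e0p]]] : exists e : gE (gF c), gs e = x0 /\ gr e = w /\ pside hab e = ord0.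
  by apply: pside_ex; rewrite eqxx.
have [e1 [e1s [e1r e1p]]] : exists e : gE (gF c), gs e = x1 /\ gr e = w /\ pside hab e = ord_max.
  by apply: pside_ex.
split; first exact: gF_regular hw.
split; first by move=> hs; exact: (hs e0 e0r).
split; first by move=> i; case: (ord2 i) => ->; [exists e0 | exists e1].
apply: iso_trans hH.
apply: (@iso_fib (@in_split_graph (gF c) w 2 (pside hab)) (gF (isc c a b w)) id); first by exists id.
move=> z z'; apply: eqnum_trans _ (eqnum_sym (gF_fib _ _ _)).
case: z => [x|j]; case: z' => [y|i] /=.
- exact: eqnum_trans (@is_ll (gF c) w 2 (pside hab) x y) (gF_fib c _ _).
- exact: eqnum_trans (@is_lr (gF c) w 2 (pside hab) x i) (pfib_cnt hab _ _ _).
- exact: eqnum_trans (@is_rl (gF c) w 2 (pside hab) j y) (gF_fib c _ _).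
- exact: eqnum_trans (@is_rr (gF c) w 2 (pside hab) j i) (pfib_cnt hab _ _ _).
Qed.

Definition rsc (V : finType) (c : V -> V -> ext) (u s t : V) (x y : {x : V | x != u}) : ext :=
  ext_add (c (val x) (val y)) (if (s == val x) && (t == val y) then c s u else Fin 0).
Arguments rsc {V} c u s t x y.

Lemma R_cnt (V : finType) (c : V -> V -> ext) u s t (hs : s != u) (ht : t != u) :
  (forall y, c u y = Fin (y == t)) -> (forall x, x != s -> c x u = Fin 0) ->
  forall H : graph, graph_iso (gF (rsc c u s t)) H -> move_eq (gF c) H.
Proof.
move=> hu hc H hH.
have [f [fs fr]] : exists e : gE (gF c), gs e = u /\ gr e = t by apply: gF_edge; rewrite hu eqxx.
have hf : gr f != u by rewrite fr.
have hin : forall e : gE (gF c), gr e = u -> gs e = s.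
  move=> e er; apply/eqP; apply: contraT => ne.
  have := eqnum_pt (gF_fib c (gs e) u) (exist _ e (introT andP (conj (eqxx _) (introT eqP er)))).
  by rewrite hc //; case.
apply: me_step; right; left.
exists u, s, f, hs, hf.
split; first exact: gF_regular hu.
split=> //.
split; first by move=> e es; exact: gF_single hu e f es fs.
split=> //.
apply: iso_trans hH.
apply: (@iso_fib (@R_graph (gF c) u s f hs hf) (gF (rsc c u s t)) id); first by exists id.
move=> x y; apply: eqnum_trans _ (eqnum_sym (gF_fib _ _ _)).
apply: eqnum_trans (@rg_fib (gF c) u s f hs hf x y) _.
rewrite /rsc fr; apply: eqnum_trans _ (eqnum_sym (ec_add _ _)).
apply: eqnum_sum; first exact: gF_fib.
case: ((s == val x) && (t == val y)).
  apply: eqnum_trans (intoE_eqnum hin) _; exact: gF_fib.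
by apply: eqnum_empty => //; exact: ec0.
Qed.


Definition csc (V : finType) (c : V -> V -> ext) (w t : V) (x y : {x : V | x != w}) : ext :=
  ext_add (c (val x) (val y)) (if val y == t then c (val x) w else Fin 0).
Arguments csc {V} c w t x y.

Definition nsrc (V : finType) (c : V -> V -> ext) (w : V) := #|[set x | is_nz (c x w)]|.

Lemma nz0 a : ~~ is_nz a -> a = Fin 0.
Proof. by case: a => [[|k]|]. Qed.

Lemma funext2 A B C (f g : A -> B -> C) : (forall x y, f x y = g x y) -> f = g.
Proof. by move=> h; apply: functional_extensionality => x; apply: functional_extensionality. Qed.

Lemma CON_base (V : finType) (c : V -> V -> ext) (w t : V) : t != w ->
  (forall y, c w y = Fin (y == t)) -> nsrc c w <= 1 ->
  forall H : graph, graph_iso (gF (csc c w t)) H -> move_eq (gF c) H.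
Proof.
move=> htw hw hn H hH.
have hww : c w w = Fin 0 by rewrite hw eq_sym (negbTE htw).
case: (pickP [pred x | is_nz (c x w)]) => [s hs | none].
- have hsw : s != w by apply: contraTneq hs => ->; rewrite /= hww.
  have hc : forall x, x != s -> c x w = Fin 0.
    move=> x hx; apply: nz0; apply: contra hx => hx.
    move: hn; rewrite /nsrc => /card_le1_eqP /(_ x s); rewrite !inE => /(_ hx hs) E.
    by apply/eqP; rewrite E.
  apply: (R_cnt hsw htw hw hc).
  suff -> : rsc c w s t = csc c w t by [].
  apply: funext2 => x y; rewrite /rsc /csc; congr ext_add.
  case: (val y =P t) => [->|/eqP ne]; last by rewrite [t == _]eq_sym (negbTE ne) andbF.
  rewrite eqxx andbT.
  by case: (s =P val x) => [->//|/eqP ne]; rewrite hc // eq_sym.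
- have hc : forall x, x != t -> c x w = Fin 0.
    by move=> x _; apply: nz0; have /= -> := none x.
  apply: (R_cnt htw htw hw hc).
  suff -> : rsc c w t t = csc c w t by [].
  apply: funext2 => x y; rewrite /rsc /csc; congr ext_add.
  have -> : c t w = Fin 0 by apply: nz0; have /= -> := none t.
  have -> : c (val x) w = Fin 0 by apply: nz0; have /= -> := none (val x).
  by case: ifP; case: ifP.
Qed.

Lemma sigeqE (T : eqType) (P : pred T) (x y : {x : T | P x}) : (x == y) = (val x == val y).
Proof. by []. Qed.

Lemma CON N : forall (V : finType) (c : V -> V -> ext) (w t : V), t != w ->
  (forall y, c w y = Fin (y == t)) -> nsrc c w <= N ->
  forall H : graph, graph_iso (gF (csc c w t)) H -> move_eq (gF c) H.
Proof.
elim: N => [|N IH] V c w t htw hw hn H hH.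
  exact: (CON_base htw hw (leq_trans hn (leq0n 1)) hH).
case: (leqP (nsrc c w) 1) => h1; first exact: (CON_base htw hw h1 hH).
move: (h1); rewrite /nsrc => /card_gt1P [s0 [s1 [hs0 hs1 hne]]]; rewrite !inE in hs0 hs1.
have hww : c w w = Fin 0 by rewrite hw eq_sym (negbTE htw).
have hs0w : s0 != w by apply: contraTneq hs0 => ->; rewrite hww.
pose a x y := if (y == w) && (x != s0) then Fin 0 else c x y.
pose b x y := if (y == w) && (x != s0) then c x y else Fin 0.
have hab : forall x y, c x y = ext_add (a x y) (b x y).
  by move=> x y; rewrite /a /b; case: ifP; rewrite ?ext_add0l ?ext_add0r.
have haww : a w w = Fin 0 by rewrite /a eqxx eq_sym hs0w.
have hbww : b w w = Fin 0 by rewrite /b eqxx eq_sym hs0w.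
pose c2 := isc c a b w.
apply: (@me_trans _ (gF c2)).
  apply: (I_cnt hab hw); last exact: iso_refl.
    by exists s0; rewrite /a eqxx eqxx andbF.
  by exists s1; rewrite /b eqxx eq_sym hne.
pose s0' : {x : V | x != w} := exist _ s0 hs0w.
pose t' : {x : V | x != w} := exist _ t htw.
pose u2 : ({x : V | x != w} + 'I_2)%type := inr ord0.
pose s2 : ({x : V | x != w} + 'I_2)%type := inl s0'.
pose t2 : ({x : V | x != w} + 'I_2)%type := inl t'.
pose c3 := rsc c2 u2 s2 t2.
apply: (@me_trans _ (gF c3)).
  apply: (@R_cnt _ c2 u2 s2 t2) => //; last exact: iso_refl.
    case=> [y|j] /=; first by rewrite hw.
    by case: ifP => _; rewrite ?haww ?hbww.
  case=> [x|j] hx /=; last by rewrite haww.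
  rewrite /a eqxx /=.
  suff -> : val x != s0 by [].
  by move: hx; apply: contra => /eqP E; apply/eqP; rewrite /s2; congr inl; apply: val_inj.
have hw3 : (inr ord_max : ({x : V | x != w} + 'I_2)%type) != u2 by [].
pose w3 : {z : ({x : V | x != w} + 'I_2)%type | z != u2} := exist (fun z => z != u2) (inr ord_max) hw3.
have ht3 : t2 != u2 by [].
pose t3 : {z : ({x : V | x != w} + 'I_2)%type | z != u2} := exist (fun z => z != u2) t2 ht3.
have c3w3 : forall y, c3 w3 y = c2 (inr ord_max) (val y).
  by move=> y; rewrite /c3 /rsc /= ext_add0r.
apply: (IH _ c3 w3 t3) => //.
- move=> y; rewrite c3w3; case: y => [[y|j] hy] /=; first by rewrite hw.
  by case: ifP => _; rewrite ?haww ?hbww.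
- have c3col : forall z, c3 z w3 = c2 (val z) (inr ord_max).
    by move=> z; rewrite /c3 /rsc andbF ext_add0r.
  pose S := [set x | is_nz (c x w)].
  pose g (z : {z : ({x : V | x != w} + 'I_2)%type | z != u2}) : V :=
    match val z with inl x => val x | inr _ => w end.
  have hS3 : forall z, is_nz (c3 z w3) -> g z \in S :\ s0.
    case=> [[x|j] hz]; rewrite c3col /=; last by rewrite hbww.
    rewrite /b eqxx /=.
    rewrite /g /= !inE; case: ifP => // hx hnz; by rewrite eq_sym hx hnz.
  have ginj : {in [set z | is_nz (c3 z w3)] &, injective g}.
    move=> [[x|j] hz] [[x'|j'] hz']; rewrite !inE !c3col /= ?hbww //.
    move=> _ _ /= E; apply: val_inj => /=; congr inl; exact: val_inj.
  rewrite /nsrc -(card_in_imset ginj).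
  apply: leq_trans (subset_leq_card (_ : _ \subset S :\ s0)) _.
    by apply/subsetP => x /imsetP [z hz ->]; apply: hS3; rewrite inE in hz.
  have := cardsD1 s0 S; rewrite inE hs0 /= add1n => E.
  by move: hn; rewrite /nsrc -/S E ltnS.
- apply: iso_trans hH.
  pose V3 := {z : ({x : V | x != w} + 'I_2)%type | z != u2}.
  pose phi (y : {y : V3 | y != w3}) : {x : V | x != w} :=
    match val (val y) with inl x => x | inr _ => t' end.
  have hl1 (x : {x : V | x != w}) : (inl x : ({x : V | x != w} + 'I_2)%type) != u2 by [].
  have hl2 (x : {x : V | x != w}) : exist (fun z => z != u2) (inl x) (hl1 x) != w3 by [].
  pose psi (x : {x : V | x != w}) : {y : V3 | y != w3} :=
    exist (fun y => y != w3) (exist (fun z => z != u2) (inl x) (hl1 x)) (hl2 x).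
  have psiK : cancel psi phi by [].
  have phiK : cancel phi psi.
    case=> [[[x|j] k1] k2]; first by apply: val_inj; apply: val_inj.
    by case: (ord2 j) => Ej; subst j; [move: (k1) | move: (k2)].
  apply: (@iso_gF _ _ _ _ phi); first by exists psi.
  move=> y y'; rewrite -{1}(phiK y) -{1}(phiK y').
  move: (phi y) (phi y') => x x'.
  rewrite /csc /c3 /rsc /=.
  have e1 : (s2 == inl x) = (s0 == val x) by [].
  have e2 : (t2 == inl x') = (val x' == t) by rewrite eq_sym.
  have e3 : (exist (fun z : ({x : V | x != w} + 'I_2)%type => z != u2) (inl x') (hl1 x') == t3)
            = (val x' == t) by [].
  have e4 : (t2 == inr ord_max) = false by [].
  have ea : a s0 w = c s0 w by rewrite /a !eqxx.
  rewrite e1 e2 e3 e4 andbF ext_add0r ea /b eqxx /=.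
  case: (val x' == t); last by rewrite andbF !ext_add0r.
  rewrite andbT; case: (s0 =P val x) => [<-|/eqP ne]; first by rewrite eqxx /= ext_add0r.
  by rewrite eq_sym ne /= ext_add0r.
Qed.


Definition cadd (V : finType) (c : V -> V -> ext) (u v : V) (k : nat) (x y : V) : ext :=
  if y == v then ext_add (if x == u then Fin k else c x v) (c x u) else c x y.

Lemma COL (V : finType) (c : V -> V -> ext) (u v : V) (k : nat) :
  u != v -> c u v = Fin k.+1 -> is_nz (c u u) ->
  move_eq (gF c) (gF (cadd c u v k)).
Proof.
move=> huv hk hnz.
pose a x y := if x == u then Fin (y == v) else c x y.
pose b x y := if x == u then (if y == v then Fin k else c x y) else Fin 0.
have hab : forall x y, c x y = ext_add (a x y) (b x y).
  move=> x y; rewrite /a /b; case: (x =P u) => [->|_]; last by rewrite ext_add0r.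
  by case: (y =P v) => [->|_]; rewrite ?hk ?ext_add0l // /= add1n.
have ha : forall y, a u y = Fin (y == v) by move=> y; rewrite /a eqxx.
have hbuu : b u u = c u u by rewrite /b eqxx (negbTE huv).
pose c2 := osc c a b u.
apply: (@me_trans _ (gF c2)).
  apply: (O_cnt hab ha); last exact: iso_refl.
  by exists u; rewrite hbuu.
have hvu : v != u by rewrite eq_sym.
pose v' : {x : V | x != u} := exist _ v hvu.
pose w : ({x : V | x != u} + 'I_2)%type := inr ord0.
pose t : ({x : V | x != u} + 'I_2)%type := inl v'.
have htw : t != w by [].
have hw : forall y, c2 w y = Fin (y == t).
  case=> [y|i] /=; first by rewrite ha.
  by rewrite ha (negbTE huv).
apply: (CON htw hw (leqnn (nsrc c2 w))).
pose V3 := {z : ({x : V | x != u} + 'I_2)%type | z != w}.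
have hl1 (x : {x : V | x != u}) : (inl x : ({x : V | x != u} + 'I_2)%type) != w by [].
have hr1 : (inr ord_max : ({x : V | x != u} + 'I_2)%type) != w by [].
pose phi (z : V3) : V := match val z with inl x => val x | inr _ => u end.
pose psi (x : V) : V3 := match insub x with
  | Some x' => exist (fun z => z != w) (inl x') (hl1 x')
  | None => exist (fun z => z != w) (inr ord_max) hr1 end.
have psiK : cancel psi phi.
  by move=> x; rewrite /psi /phi; case: insubP => [x' _ ex|/negPn/eqP ex] /=; rewrite ?ex.
have phiK : cancel phi psi.
  case=> [[x|j] hz]; rewrite /phi /psi /=.
    case: insubP => [x' _ ex|]; last by rewrite (valP x).
    by apply: val_inj => /=; congr inl; apply: val_inj.
  case: insubP => [x' hx _|_]; first by rewrite eqxx in hx.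
  apply: val_inj => /=; congr inr; case: (ord2 j) => Ej //; by rewrite Ej in hz.
apply: (@iso_gF _ _ _ _ phi); first by exists psi.
move=> z z'; rewrite -{1}(phiK z) -{1}(phiK z').
move: (phi z) (phi z') => x y.
rewrite /csc /cadd /psi.
case: insubP => [x' hx ex|hx]; case: insubP => [y' hy ey|hy] /=.
- subst x y; have -> : (inl y' == t) = (val y' == v) by [].
  rewrite (negbTE hx); by case: (val y' =P v) => [->|_]; rewrite ?ext_add0r.
- subst x; move/negPn/eqP: hy => ->; by rewrite (negbTE huv) ext_add0r.
- subst y; move/negPn/eqP: hx => ->; have -> : (inl y' == t) = (val y' == v) by [].
  rewrite hbuu /b eqxx; by case: ifP => _; rewrite ?ext_add0r.
- move/negPn/eqP: hx => ->; move/negPn/eqP: hy => ->.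
  by rewrite hbuu (negbTE huv) ext_add0r.
Qed.


Import GRing.Theory Num.Theory.
Local Open Scope ring_scope.

Lemma rank1_rows n (C : 'M[nat]_n) (o x : 'I_n) (d : nat) :
  d != 0%N -> C o o = d -> C x o = d ->
  \rank (map_mx (fun k : nat => (k%:R : rat)) C) = 1%N ->
  forall y, C x y = C o y.
Proof.
move=> d0 Coo Cxo hr y.
set M := map_mx (fun k : nat => (k%:R : rat)) C.
have r0nz : row o M != 0.
  apply/eqP => /matrixP /(_ 0 o); rewrite !mxE Coo => /eqP; rewrite pnatr_eq0 (negbTE d0) //.
have hr0 : \rank (row o M) = 1%N by rewrite rank_rV r0nz.
have sub0 := row_sub o M.
have := (mxrank_leqif_eq sub0).2; rewrite hr0 hr eqxx => /esym /andP [_ sM].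
have /submxP [D hD] : (row x M <= row o M)%MS by apply: submx_trans (row_sub x M) sM.
have E z : M x z = D 0 0 * M o z.
  by have := congr1 (fun A : 'M[rat]_(1, n) => A 0 z) hD; rewrite !mxE big_ord1 !mxE.
have D1 : D 0 0 = 1.
  have := E o; rewrite /M !mxE Cxo Coo => /esym.
  rewrite -[X in _ = X]mul1r => /mulIf; apply; rewrite pnatr_eq0 //.
have := E y; rewrite D1 mul1r /M !mxE => /eqP; rewrite eqr_nat => /eqP //.
Qed.

Local Close Scope ring_scope.

Definition cntF (n m : nat) (R : 'I_n -> nat) (x y : 'I_n) : ext :=
  ext_add (Jnm n m x y) (Fin (if (x < m)%N then R y else 0%N)).

Lemma cntF_lt n m R (x y : 'I_n) : (x < m)%N -> cntF m R x y = Fin ((x == y) + R y)%N.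
Proof. by move=> h; rewrite /cntF mxE h. Qed.

Lemma cntF_ge n m R (x y : 'I_n) : ~~ (x < m)%N -> cntF m R x y = Inf.
Proof. by move=> h; rewrite /cntF mxE (negbTE h). Qed.

Lemma graph_ofE n (A : 'M[ext]_n) : graph_of A = gF (fun x y => A x y).
Proof. by []. Qed.

Lemma main_ind n m (o : 'I_n) (d : nat) : (o < m)%N -> (0 < d)%N ->
  forall N (R : 'I_n -> nat), R o = d -> (forall y, d <= R y)%N -> (forall y, d %| R y)%N ->
  (\sum_y R y <= N)%N ->
  move_eq (gF (cntF m (fun _ : 'I_n => d))) (gF (cntF m R)).
Proof.
move=> om d0 N; elim: N => [|N IH] R Ro dR ddR hs;
  (case: (boolP [forall y, R y <= d]) => [/forallP hall | /forallPn]);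
  try (have E : R = (fun _ => d) by apply: functional_extensionality => y; apply/eqP; rewrite eqn_leq hall dR);
  try (rewrite E; exact: me_refl).
- move=> [y]; rewrite -ltnNge => hy.
  move: hs; rewrite (bigD1 y) //=; lia.
move=> [y]; rewrite -ltnNge => hy.
have yo : o != y by apply: contraTneq hy => <-; rewrite Ro ltnn.
pose R' z := if z == y then (R y - d)%N else R z.
have h2d : (d.*2 <= R y)%N.
  case/dvdnP: (ddR y) => q Eq; rewrite Eq in hy *.
  case: q {Eq} hy => [|[|q]] hy; first by rewrite mul0n ltn0 in hy.
    by rewrite mul1n ltnn in hy.
  by rewrite -mul2n leq_mul2r orbT.
have sR' : (\sum_z R' z + d = \sum_z R z)%N.
  rewrite (bigD1 y) //= [in RHS](bigD1 y) //=.
  have -> : R' y = (R y - d)%N by rewrite /R' /= eqxx.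
  rewrite (eq_bigr (fun z => R z)); last by move=> z /negbTE hz; rewrite /R' /= hz.
  move: h2d; rewrite -addnn; lia.
have Ro' : R' o = d by rewrite /R' /= (negbTE yo).
have dR' : forall z, (d <= R' z)%N.
  move=> z; rewrite /R' /=; case: ifP => _ //; move: h2d; rewrite -addnn; lia.
have ddR' : forall z, (d %| R' z)%N.
  move=> z; rewrite /R' /=; case: ifP => _ //; exact: dvdn_sub.
have hs' : (\sum_z R' z <= N)%N by move: hs; rewrite -sR'; lia.
apply: (me_trans (IH R' Ro' dR' ddR' hs')).
have hk : cntF m R' o y = Fin (R y - d - 1).+1.
  rewrite cntF_lt // (negbTE yo) /R' /= eqxx /=; congr Fin; move: h2d; rewrite -addnn; lia.
have hnz : is_nz (cntF m R' o o) by rewrite cntF_lt // eqxx.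
have := COL yo hk hnz.
suff -> : cadd (cntF m R') o y (R y - d - 1) = cntF m R by [].
apply: funext2 => x z; rewrite /cadd.
case: (z =P y) => [->|/eqP zy]; last first.
  by rewrite /cntF /R' /= (negbTE zy).
case: (boolP (x < m)%N) => xm; last by rewrite !cntF_ge //; case: ifP.
case: (x =P o) => [->|/eqP xo].
  rewrite !cntF_lt // eqxx Ro' (negbTE yo) /=.
  by congr Fin; move: h2d; rewrite -addnn; lia.
rewrite !cntF_lt // (negbTE xo) /R' /= eqxx (negbTE yo) /=.
by congr Fin; move: h2d; rewrite -addnn; lia.
Qed.

Theorem lemma8p4 (n m : nat) (C : 'M[nat]_n) :
  (m <= n)%N ->
  (forall i j : 'I_n, (i < m)%N -> C i j != 0%N) ->
  (forall i j : 'I_n, (m <= i)%N -> C i j = 0%N) ->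
  (forall i j : 'I_n, nat_of_ord j = 0%N ->
      C i j = (if (i < m)%N then gcd_nz C else 0%N)) ->
  \rank (map_mx (fun k : nat => (k%:R : rat)) C) = 1%N ->
  move_eq (graph_of (ext_addmx (Jnm n m) (ext_of_mx C)))
          (graph_of (ext_addmx (Jnm n m) (ext_of_mx (Dmx n m (gcd_nz C))))).
Proof.
move=> hmn hnz hz hcol hr.
set d := gcd_nz C.
case: (posnP m) => [m0|m0].
  have -> : ext_of_mx C = ext_of_mx (Dmx n m d).
    by apply/matrixP => i j; rewrite !mxE hz ?m0 //.
  exact: me_refl.
pose o : 'I_n := Ordinal (leq_trans m0 hmn).
have om : (o < m)%N by [].
have Cxo : forall x : 'I_n, (x < m)%N -> C x o = d by move=> x xm; rewrite hcol // xm.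
have Coo := Cxo o om.
have d0 : (0 < d)%N by rewrite lt0n -Coo hnz.
have F1 : forall x y : 'I_n, (x < m)%N -> C x y = C o y.
  move=> x y xm; apply: (rank1_rows (d := d)) => //; [by rewrite -lt0n | exact: Cxo].
have ddiv : forall y, (d %| C o y)%N.
  move=> y; rewrite /d /gcd_nz (bigD1 (o, y)) /=; first exact: dvdn_gcdl.
  exact: hnz.
have GC : graph_of (ext_addmx (Jnm n m) (ext_of_mx C)) = gF (cntF m (fun y => C o y)).
  rewrite graph_ofE; congr gF; apply: funext2 => x y.
  rewrite /cntF /ext_addmx /ext_of_mx !mxE.
  case: ifP => xm; first by rewrite F1.
  by rewrite hz // leqNgt xm.
have GD : graph_of (ext_addmx (Jnm n m) (ext_of_mx (Dmx n m d))) = gF (cntF m (fun _ : 'I_n => d)).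
  rewrite graph_ofE; congr gF; apply: funext2 => x y.
  by rewrite /cntF /ext_addmx /ext_of_mx /Dmx !mxE.
rewrite GC GD; apply: me_sym.
apply: (@main_ind n m o d om d0 (\sum_y C o y) (fun y => C o y) Coo _ ddiv (leqnn _)).
move=> y; apply: dvdn_leq; [by rewrite lt0n hnz | exact: ddiv].
Qed.
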